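(* Let $\alpha\ge0$ and $\phi(x)=x(1-x)^{-\alpha}$, with Taylor coefficients $\phi_m=m(\alpha)_{m-1}$ at $0$. Then $\phi\in\mathcal S$ if and only if $\alpha\in[0,1]$.
   Context: $(a)_j=a(a+1)\cdots(a+j-1)$ denotes the Pochhammer symbol, with $(a)_0=1$. For $\phi(x)=\sum_{m\ge1}\phi_mx^m/m!$ with $\phi_m\ge0$, $\phi_1>0$ and radius of convergence $x_0\in(0,\infty]$ (here $x_0=1$), we write $\phi\in\mathcal S$ if $\phi$ is finite on the whole half-line $(-\infty,x_0)$ and $\phi'$ is absolutely monotone there, i.e. $\phi^{(n)}(x)\ge0$ for all $n\ge1$ and all $x<x_0$. *)

(* Defs.v *)
From Stdlib Require Import Reals.
From Coquelicot Require Import Coquelicot.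
Open Scope R_scope.

Fixpoint pochhammer (a : R) (j : nat) : R :=
  match j with
  | O => 1
  | S k => pochhammer a k * (a + INR k)
  end.

(* phi(x) = x (1-x)^(-alpha); only used on x < 1, where 1 - x > 0. *)
Definition phi_alpha (alpha : R) (x : R) : R := x * Rpower (1 - x) (- alpha).

(* Taylor coefficients phi_m = m (alpha)_(m-1) (phi = sum phi_m x^m / m!). *)
Definition phi_coef (alpha : R) (m : nat) : R :=
  INR m * pochhammer alpha (Nat.pred m).

(* Membership in the class S on (-oo, x0): phi is finite there (automatic for a
   real-valued function) and phi' is absolutely monotone there, i.e. for every
   n >= 1 and every x < x0 the n-th derivative phi^(n)(x) exists and is >= 0. *)
Definition in_class_S (phi : R -> R) (x0 : R) : Prop :=
  forall (n : nat) (x : R), (1 <= n)%nat -> x < x0 ->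
    ex_derive_n phi n x /\ 0 <= Derive_n phi n x.

(* Main.v *)
Require Import Defs.
From Stdlib Require Import Reals Lra Psatz.
From Coquelicot Require Import Coquelicot.
Open Scope R_scope.

Definition gfun (alpha : R) (n : nat) (x : R) : R :=
  pochhammer alpha n * exp ((- alpha - INR n) * ln (1 - x))
  - pochhammer (alpha - 1) n * exp ((1 - alpha - INR n) * ln (1 - x)).

Lemma exp_shift (b x : R) : x < 1 ->
  exp ((b - 1) * ln (1 - x)) = exp (b * ln (1 - x)) / (1 - x).
Proof.
  intros Hx. replace ((b - 1) * ln (1 - x)) with (b * ln (1 - x) + - ln (1 - x)) by ring.
  rewrite exp_plus, exp_Ropp, exp_ln by lra. unfold Rdiv. reflexivity.
Qed.

Lemma deriv_g (alpha : R) (n : nat) (x : R) : x < 1 ->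
  is_derive (gfun alpha n) x (gfun alpha (S n) x).
Proof.
  intros Hx. unfold gfun.
  auto_derive.
  - split; [lra|split; [lra|exact I]].
  - simpl pochhammer. rewrite S_INR.
    replace (- alpha - (INR n + 1)) with ((- alpha - INR n) - 1) by ring.
    replace (1 - alpha - (INR n + 1)) with ((1 - alpha - INR n) - 1) by ring.
    rewrite !exp_shift by lra. replace (1 + - x) with (1 - x) by ring. field. lra.
Qed.

Lemma main_ind (alpha : R) (n : nat) : forall x, x < 1 ->
  ex_derive_n (phi_alpha alpha) n x /\ Derive_n (phi_alpha alpha) n x = gfun alpha n x.
Proof.
  induction n as [|n IH]; intros x Hx.
  - split; [exact I|]. simpl. unfold phi_alpha, gfun, Rpower. simpl.
    replace ((1 - alpha - 0) * ln (1 - x)) with ((- alpha - 0) * ln (1 - x) + ln (1 - x)) by ring.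
    rewrite exp_plus, exp_ln by lra.
    replace (- alpha - 0) with (- alpha) by ring. ring.
  - assert (Hloc : locally x (fun t => gfun alpha n t = Derive_n (phi_alpha alpha) n t)).
    { apply (filter_imp (fun t => t < 1)).
      + intros t Ht. symmetry. apply (IH t Ht).
      + apply open_lt. exact Hx. }
    assert (Hd : is_derive (Derive_n (phi_alpha alpha) n) x (gfun alpha (S n) x)).
    { eapply is_derive_ext_loc. exact Hloc. apply deriv_g. exact Hx. }
    split.
    + simpl. eexists. exact Hd.
    + simpl. apply is_derive_unique. exact Hd.
Qed.

Lemma poch_nonneg (a : R) (n : nat) : 0 <= a -> 0 <= pochhammer a n.
Proof.
  intros Ha. induction n; simpl. lra. apply Rmult_le_pos; [lra|]. pose proof (pos_INR n). lra.
Qed.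

Lemma poch_shift (a : R) (m : nat) : pochhammer (a - 1) (S m) = (a - 1) * pochhammer a m.
Proof.
  induction m. simpl. ring.
  change (pochhammer (a-1) (S (S m))) with (pochhammer (a-1) (S m) * (a - 1 + INR (S m))).
  rewrite IHm. change (pochhammer a (S m)) with (pochhammer a m * (a + INR m)). rewrite S_INR. ring.
Qed.

Lemma g_split (alpha : R) (n : nat) (x : R) : x < 1 ->
  gfun alpha n x = exp ((- alpha - INR n) * ln (1 - x)) *
    (pochhammer alpha n - pochhammer (alpha - 1) n * (1 - x)).
Proof.
  intros Hx. unfold gfun.
  replace ((1 - alpha - INR n) * ln (1 - x)) with ((- alpha - INR n) * ln (1 - x) + ln (1 - x)) by ring.
  rewrite exp_plus, exp_ln by lra. ring.
Qed.

Theorem proposition14 (alpha : R) (Halpha : 0 <= alpha) :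
  in_class_S (phi_alpha alpha) 1 <-> (0 <= alpha /\ alpha <= 1).
Proof.
  split.
  - intros H. split; [exact Halpha|].
    destruct (Rle_dec alpha 1) as [Hle|Hgt]; [exact Hle|exfalso].
    apply Rnot_le_lt in Hgt.
    set (u := 2 * alpha / (alpha - 1)).
    assert (Hu : 0 < u) by (unfold u; apply Rdiv_lt_0_compat; lra).
    destruct (H 1%nat (1 - u) (le_n 1) ltac:(lra)) as [_ H2].
    destruct (main_ind alpha 1 (1 - u) ltac:(lra)) as [_ H3].
    rewrite H3, g_split in H2 by lra.
    replace (1 - (1 - u)) with u in H2 by ring.
    simpl in H2.
    assert (Hb : 1 * (alpha + 0) - 1 * (alpha - 1 + 0) * u = - alpha).
    { unfold u. field. lra. }
    rewrite Hb in H2.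
    pose proof (exp_pos ((- alpha - 1) * ln u)).
    nra.
  - intros [_ H1] n x Hn Hx.
    destruct (main_ind alpha n x Hx) as [He Hg]. split; [exact He|].
    rewrite Hg, g_split by exact Hx.
    apply Rmult_le_pos; [apply Rlt_le, exp_pos|].
    destruct n as [|m]; [lia|].
    rewrite poch_shift. simpl.
    pose proof (poch_nonneg alpha m Halpha). pose proof (pos_INR m).
    assert (0 <= (alpha + INR m) - (alpha - 1) * (1 - x)) by nra.
    nra.
Qed.
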